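(* Let $n<\omega$ and let $\mathcal{K}$ be a class of simple algebras of $\mathbf{M}_n$ such that the variety $\mathbf{V}(\mathcal{K})$ generated by $\mathcal{K}$ is locally finite. Then every finite simple algebra in $\mathbf{V}(\mathcal{K})$ is isomorphic to a subalgebra of a member of $\mathcal{K}$.
   Context: $\mathbf{M}_n$ is the variety of pseudocomplemented de Morgan algebras $(L;\wedge,\vee,{}^\ast,{}^\prime,0,1)$ (bounded distributive lattice, pseudocomplement ${}^\ast$, de Morgan involution ${}^\prime$) satisfying $x\wedge x^{\prime\ast\prime}\le y\vee y^\ast$ and $(x\wedge x^{\prime\ast})^{n(\prime\ast)}=(x\wedge x^{\prime\ast})^{(n+1)(\prime\ast)}$, where $x^{0(\prime\ast)}=x$, $x^{(k+1)(\prime\ast)}=((x^{k(\prime\ast)})')^\ast$. Simple algebras are non-trivial. *)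

(* Defs.v *)
From Stdlib Require Import List.

Record sig_alg : Type := SigAlg {
  car :> Type;
  meet : car -> car -> car;
  join : car -> car -> car;
  pstar : car -> car;
  dprime : car -> car;
  bot : car;
  top : car
}.

Arguments meet {s} _ _.
Arguments join {s} _ _.
Arguments pstar {s} _.
Arguments dprime {s} _.
Arguments bot {s}.
Arguments top {s}.

Definition le {A : sig_alg} (x y : A) : Prop := meet x y = x.

Fixpoint iter_ps {A : sig_alg} (k : nat) (x : A) : A :=
  match k with
  | O => x
  | S k' => pstar (dprime (iter_ps k' x))
  end.

Definition is_bdl (A : sig_alg) : Prop :=
  (forall x y z : A, meet x (meet y z) = meet (meet x y) z) /\
  (forall x y z : A, join x (join y z) = join (join x y) z) /\
  (forall x y : A, meet x y = meet y x) /\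
  (forall x y : A, join x y = join y x) /\
  (forall x y : A, meet x (join x y) = x) /\
  (forall x y : A, join x (meet x y) = x) /\
  (forall x y z : A, meet x (join y z) = join (meet x y) (meet x z)) /\
  (forall x : A, join x bot = x) /\
  (forall x : A, meet x top = x).

Definition is_pseudocompl (A : sig_alg) : Prop :=
  forall x y : A, meet x y = bot <-> le y (pstar x).

Definition is_demorgan (A : sig_alg) : Prop :=
  (forall x : A, dprime (dprime x) = x) /\
  (forall x y : A, dprime (meet x y) = join (dprime x) (dprime y)) /\
  (forall x y : A, dprime (join x y) = meet (dprime x) (dprime y)) /\
  dprime (@bot A) = top /\ dprime (@top A) = bot.

Definition in_Mn (n : nat) (A : sig_alg) : Prop :=
  is_bdl A /\ is_pseudocompl A /\ is_demorgan A /\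
  (forall x y : A, le (meet x (dprime (pstar (dprime x)))) (join y (pstar y))) /\
  (forall x : A, iter_ps n (meet x (pstar (dprime x)))
                 = iter_ps (S n) (meet x (pstar (dprime x)))).

Definition is_hom {A B : sig_alg} (f : A -> B) : Prop :=
  (forall x y, f (meet x y) = meet (f x) (f y)) /\
  (forall x y, f (join x y) = join (f x) (f y)) /\
  (forall x, f (pstar x) = pstar (f x)) /\
  (forall x, f (dprime x) = dprime (f x)) /\
  f bot = bot /\ f top = top.

Definition injective {X Y : Type} (f : X -> Y) : Prop :=
  forall x y, f x = f y -> x = y.
Definition surjective {X Y : Type} (f : X -> Y) : Prop :=
  forall y, exists x, f x = y.

Definition is_congruence {A : sig_alg} (th : A -> A -> Prop) : Prop :=
  (forall x, th x x) /\ (forall x y, th x y -> th y x) /\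
  (forall x y z, th x y -> th y z -> th x z) /\
  (forall x1 y1 x2 y2, th x1 y1 -> th x2 y2 -> th (meet x1 x2) (meet y1 y2)) /\
  (forall x1 y1 x2 y2, th x1 y1 -> th x2 y2 -> th (join x1 x2) (join y1 y2)) /\
  (forall x y, th x y -> th (pstar x) (pstar y)) /\
  (forall x y, th x y -> th (dprime x) (dprime y)).

Definition simple (A : sig_alg) : Prop :=
  (exists x y : A, x <> y) /\
  forall th : A -> A -> Prop, is_congruence th ->
    (forall x y, th x y -> x = y) \/ (forall x y : A, th x y).

Definition prod_alg (I : Type) (F : I -> sig_alg) : sig_alg :=
  {| car := forall i, F i;
     meet := fun f g i => meet (f i) (g i);
     join := fun f g i => join (f i) (g i);
     pstar := fun f i => pstar (f i);
     dprime := fun f i => dprime (f i);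
     bot := fun i => bot;
     top := fun i => top |}.

Definition alg_class := sig_alg -> Prop.

Definition closed_H (C : alg_class) : Prop :=
  forall (A B : sig_alg) (f : A -> B), C A -> is_hom f -> surjective f -> C B.
Definition closed_S (C : alg_class) : Prop :=
  forall (A B : sig_alg) (f : B -> A), C A -> is_hom f -> injective f -> C B.
Definition closed_P (C : alg_class) : Prop :=
  forall (I : Type) (F : I -> sig_alg), (forall i, C (F i)) -> C (prod_alg I F).

Definition is_variety (C : alg_class) : Prop :=
  closed_H C /\ closed_S C /\ closed_P C.

Definition gen_variety (K : alg_class) : alg_class :=
  fun A => forall C : alg_class, is_variety C -> (forall B, K B -> C B) -> C A.

Definition finite_alg (A : sig_alg) : Prop :=
  exists l : list A, forall x : A, In x l.

Inductive generated {A : sig_alg} (g : list A) : A -> Prop :=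
  | gen_in : forall x, In x g -> generated g x
  | gen_meet : forall x y, generated g x -> generated g y -> generated g (meet x y)
  | gen_join : forall x y, generated g x -> generated g y -> generated g (join x y)
  | gen_pstar : forall x, generated g x -> generated g (pstar x)
  | gen_dprime : forall x, generated g x -> generated g (dprime x)
  | gen_bot : generated g bot
  | gen_top : generated g top.

Definition fin_generated (A : sig_alg) : Prop :=
  exists g : list A, forall x : A, generated g x.

Definition locally_finite (C : alg_class) : Prop :=
  forall A, C A -> fin_generated A -> finite_alg A.

(* Main.v *)
Require Import Defs.
From Stdlib Require Import List Classical ProofIrrelevance FunctionalExtensionality IndefiniteDescription.
Import ListNotations.

Section Lat.
Variable A : sig_alg.
Hypothesis HB : is_bdl A.

Lemma mA (x y z : A) : meet x (meet y z) = meet (meet x y) z. Proof. apply HB. Qed.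
Lemma jA (x y z : A) : join x (join y z) = join (join x y) z. Proof. apply HB. Qed.
Lemma mC (x y : A) : meet x y = meet y x. Proof. apply HB. Qed.
Lemma jC (x y : A) : join x y = join y x. Proof. apply HB. Qed.
Lemma mJ (x y : A) : meet x (join x y) = x. Proof. apply HB. Qed.
Lemma jM (x y : A) : join x (meet x y) = x. Proof. apply HB. Qed.
Lemma dist (x y z : A) : meet x (join y z) = join (meet x y) (meet x z). Proof. apply HB. Qed.
Lemma j0 (x : A) : join x bot = x. Proof. apply HB. Qed.
Lemma m1 (x : A) : meet x top = x. Proof. apply HB. Qed.

Lemma m_idem (x : A) : meet x x = x.
Proof. transitivity (meet x (join x (meet x x))). f_equal. symmetry. apply jM. apply mJ. Qed.
Lemma j_idem (x : A) : join x x = x.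
Proof. transitivity (join x (meet x (join x x))). f_equal. symmetry. apply mJ. apply jM. Qed.
Lemma m0 (x : A) : meet x bot = bot.
Proof. rewrite mC. transitivity (meet bot (join bot x)). rewrite jC, j0. auto. apply mJ. Qed.
Lemma j1 (x : A) : join x top = top.
Proof. rewrite jC. transitivity (join top (meet top x)). rewrite mC, m1. auto. apply jM. Qed.
Lemma m1l (x : A) : meet top x = x. Proof. rewrite mC; apply m1. Qed.
Lemma j0l (x : A) : join bot x = x. Proof. rewrite jC; apply j0. Qed.
Lemma dist_r (x y z : A) : meet (join x y) z = join (meet x z) (meet y z).
Proof. rewrite mC, dist, (mC z x), (mC z y). auto. Qed.

Lemma le_refl (x : A) : le x x. Proof. apply m_idem. Qed.
Lemma le_trans (x y z : A) : le x y -> le y z -> le x z.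
Proof. unfold le; intros h1 h2. rewrite <- h1, <- mA, h2. auto. Qed.
Lemma le_antisym (x y : A) : le x y -> le y x -> x = y.
Proof. unfold le; intros h1 h2. transitivity (meet x y). auto. rewrite mC; auto. Qed.
Lemma le_meet (x y z : A) : le z x -> le z y -> le z (meet x y).
Proof. unfold le; intros h1 h2. rewrite mA, h1, h2. auto. Qed.
Lemma le_ml (x y : A) : le (meet x y) x.
Proof. unfold le. rewrite (mC x y), <- mA, m_idem. auto. Qed.
Lemma le_mr (x y : A) : le (meet x y) y.
Proof. unfold le. rewrite <- mA, m_idem. auto. Qed.
Lemma le_jl (x y : A) : le x (join x y). Proof. apply mJ. Qed.
Lemma le_jr (x y : A) : le y (join x y). Proof. rewrite jC. apply mJ. Qed.
Lemma join_le (x y z : A) : le x z -> le y z -> le (join x y) z.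
Proof. unfold le; intros h1 h2. rewrite dist_r, h1, h2. auto. Qed.
Lemma le_top (x : A) : le x top. Proof. apply m1. Qed.
Lemma bot_le (x : A) : le bot x. Proof. unfold le. rewrite mC. apply m0. Qed.
Lemma top_le (x : A) : le top x -> x = top.
Proof. intro h. apply le_antisym; auto using le_top. Qed.
Lemma le_bot (x : A) : le x bot -> x = bot.
Proof. intro h. apply le_antisym; auto using bot_le. Qed.
Lemma le_join_eq (x y : A) : le x y -> join x y = y.
Proof. unfold le; intro h. rewrite <- h, jC, mC. apply jM. Qed.
Lemma join_eq_le (x y : A) : join x y = y -> le x y.
Proof. unfold le; intro h. rewrite <- h. apply mJ. Qed.
Lemma meet_mono (a b c d : A) : le a b -> le c d -> le (meet a c) (meet b d).
Proof. intros h1 h2. apply le_meet. eapply le_trans. apply le_ml. auto.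
  eapply le_trans. apply le_mr. auto. Qed.
Lemma join_mono (a b c d : A) : le a b -> le c d -> le (join a c) (join b d).
Proof. intros h1 h2. apply join_le. eapply le_trans. apply h1. apply le_jl.
  eapply le_trans. apply h2. apply le_jr. Qed.
Lemma meet_top (a b : A) : meet a b = top -> a = top /\ b = top.
Proof. intro h. split; apply top_le; rewrite <- h. apply le_ml. apply le_mr. Qed.
Lemma le_eq (x y : A) : x = y -> le x y. Proof. intros ->. apply le_refl. Qed.
End Lat.

Section PC.
Variable A : sig_alg.
Hypothesis HB : is_bdl A.
Hypothesis HP : is_pseudocompl A.

Lemma pc_le (x y : A) : meet x y = bot -> le y (pstar x). Proof. apply HP. Qed.
Lemma pc_meet (x : A) : meet x (pstar x) = bot. Proof. apply HP. apply le_refl; auto. Qed.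
Lemma pc_bot : pstar (@bot A) = top.
Proof. apply top_le; auto. apply pc_le. apply m1; auto. Qed.
Lemma pc_2 (x : A) : le x (pstar (pstar x)).
Proof. apply pc_le. rewrite mC; auto. apply pc_meet. Qed.
Lemma pc_anti (x y : A) : le x y -> le (pstar y) (pstar x).
Proof. intro h. apply pc_le. apply le_bot; auto. rewrite <- (pc_meet y).
  apply meet_mono; auto. apply le_refl; auto. Qed.
Lemma pc_3 (x : A) : pstar (pstar (pstar x)) = pstar x.
Proof. apply le_antisym; auto. apply pc_anti. apply pc_2. apply pc_2. Qed.
Lemma pc_top_inv (y : A) : pstar y = top -> y = bot.
Proof. intro h. rewrite <- (pc_meet y), h, m1; auto. Qed.
Lemma pc_eq2 (x y : A) : meet y (pstar (meet x y)) = meet y (pstar x).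
Proof. apply le_antisym; auto.
  - apply le_meet; auto. apply le_ml; auto. apply pc_le.
    apply le_bot; auto. rewrite <- (pc_meet (meet x y)). apply le_meet; auto.
    apply le_meet; auto. apply le_ml; auto. eapply le_trans; auto. apply le_mr; auto. apply le_ml; auto.
    eapply le_trans; auto. apply le_mr; auto. apply le_mr; auto.
  - apply le_meet; auto. apply le_ml; auto. apply pc_le.
    apply le_bot; auto. rewrite <- (pc_meet x). apply le_meet; auto.
    eapply le_trans; auto. apply le_ml; auto. apply le_ml; auto.
    eapply le_trans; auto. apply le_mr; auto. apply le_mr; auto.
Qed.
End PC.

Definition DD {A:sig_alg} (p q : A) := pstar (meet p (pstar q)).
Definition gg {A:sig_alg} (x:A) := pstar (dprime x).
Definition dd {A:sig_alg} (x y : A) :=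
  meet (meet (DD (pstar x) (pstar y)) (DD (pstar y) (pstar x)))
       (meet (DD (gg x) (gg y)) (DD (gg y) (gg x))).
Definition Ud (n:nat) {A:sig_alg} (x y : A) :=
  iter_ps n (meet (dd x y) (pstar (dprime (dd x y)))).

Section Mn.
Variable n : nat.
Variable A : sig_alg.
Hypothesis HM : in_Mn n A.

Let HB : is_bdl A. Proof. apply HM. Qed.
Let HP : is_pseudocompl A. Proof. apply HM. Qed.
Let HD : is_demorgan A. Proof. apply HM. Qed.
Let Hreg : forall x y : A, le (meet x (dprime (pstar (dprime x)))) (join y (pstar y)).
Proof. apply HM. Qed.
Let Hit : forall x : A, iter_ps n (meet x (pstar (dprime x)))
                 = iter_ps (S n) (meet x (pstar (dprime x))).
Proof. apply HM. Qed.

Lemma dm2 (x : A) : dprime (dprime x) = x. Proof. apply HD. Qed.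
Lemma dmM (x y : A) : dprime (meet x y) = join (dprime x) (dprime y). Proof. apply HD. Qed.
Lemma dmJ (x y : A) : dprime (join x y) = meet (dprime x) (dprime y). Proof. apply HD. Qed.
Lemma dm0 : dprime (@bot A) = top. Proof. apply HD. Qed.
Lemma dm1 : dprime (@top A) = bot. Proof. apply HD. Qed.

Lemma DD_refl (p : A) : DD p p = top.
Proof. unfold DD. rewrite pc_meet, pc_bot; auto. Qed.
Lemma dd_refl (x : A) : dd x x = top.
Proof. unfold dd. rewrite !DD_refl, !m1; auto. Qed.
Lemma iter_top k : iter_ps k (@top A) = top.
Proof. induction k; simpl; auto. rewrite IHk, dm1, pc_bot; auto. Qed.
Lemma Ud_refl (x : A) : Ud n x x = top.
Proof. unfold Ud. rewrite dd_refl, dm1, pc_bot, m1, iter_top; auto. Qed.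

Lemma gg_top_inv (y : A) : pstar (dprime y) = top -> y = top.
Proof. intro h. apply pc_top_inv in h; auto. rewrite <- (dm2 y), h, dm0. auto. Qed.
Lemma iter_top_inv k (y : A) : iter_ps k y = top -> y = top.
Proof. induction k; simpl; auto. intro h. apply IHk. apply gg_top_inv; auto. Qed.

Lemma DD_top (p q : A) : DD p q = top -> le p (pstar (pstar q)).
Proof. unfold DD. intro h. apply pc_top_inv in h; auto. apply pc_le; auto.
  rewrite mC; auto. Qed.

Lemma regular (x y : A) : pstar x = pstar y -> gg x = gg y -> le x y.
Proof.
  intros h1 h2. unfold gg in h2.
  assert (hj : join y (dprime (pstar (dprime x))) = top).
  { rewrite h2. rewrite <- (dm2 y) at 1. rewrite <- dmM, pc_meet, dm0; auto. }
  set (w := meet x (dprime (pstar (dprime x)))).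
  assert (hx : x = join (meet x y) w).
  { unfold w. rewrite <- dist, hj, m1; auto. }
  assert (hw : le w (meet x y)).
  { assert (le w (meet x (join y (pstar y)))).
    { apply le_meet; auto. apply le_ml; auto. apply Hreg. }
    rewrite dist, <- h1, pc_meet, j0 in H; auto. }
  assert (hl : le (join (meet x y) w) (meet x y)).
  { apply join_le; auto. apply le_refl; auto. }
  rewrite <- hx in hl. eapply le_trans; eauto. apply le_mr; auto.
Qed.

Lemma dd_top_inv (x y : A) : dd x y = top -> x = y.
Proof.
  unfold dd. intro h.
  apply meet_top in h; auto. destruct h as [h1 h2].
  apply meet_top in h1; auto. apply meet_top in h2; auto.
  destruct h1 as [a1 a2]; destruct h2 as [b1 b2].
  apply DD_top in a1, a2, b1, b2. rewrite pc_3 in a1, a2; auto.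
  assert (e1 : pstar x = pstar y) by (apply le_antisym; auto).
  assert (e2 : gg x = gg y).
  { unfold gg in *. rewrite pc_3 in b1, b2; auto. apply le_antisym; auto. }
  apply le_antisym; auto; apply regular; auto.
Qed.

Lemma cong_lemma_star (a v : A) : meet (pstar a) v = meet (pstar (meet a v)) v.
Proof.
  apply le_antisym; auto.
  - apply le_meet; auto. 2: apply le_mr; auto. apply pc_le; auto.
    apply le_bot; auto. rewrite <- (pc_meet _ HB HP a); auto. apply le_meet; auto.
    eapply le_trans; auto. apply le_ml; auto. apply le_ml; auto.
    eapply le_trans; auto. apply le_mr; auto. apply le_ml; auto.
  - apply le_meet; auto. 2: apply le_mr; auto. apply pc_le; auto.
    apply le_bot; auto. rewrite <- (pc_meet _ HB HP (meet a v)); auto. apply le_meet; auto.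
    apply le_meet; auto. apply le_ml; auto.
    eapply le_trans; auto. apply le_mr; auto. apply le_mr; auto.
    eapply le_trans; auto. apply le_mr; auto. apply le_ml; auto.
Qed.

Lemma meet_distr (a b v : A) : meet (meet a b) v = meet (meet a v) (meet b v).
Proof.
  apply le_antisym; auto.
  - apply le_meet; auto; apply meet_mono; auto using le_refl, le_ml, le_mr.
  - apply le_meet; auto. apply meet_mono; auto using le_refl, le_ml, le_mr.
    eapply le_trans; auto. apply le_ml; auto. apply le_mr; auto.
Qed.

Lemma Ud_simple (x y : A) : simple A -> x <> y -> Ud n x y = bot.
Proof.
  intros [_ Hs] hne.
  set (v := Ud n x y).
  assert (hv : pstar (dprime v) = v).
  { unfold v, Ud. symmetry. apply Hit. }
  assert (hvv : meet (dprime v) v = bot).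
  { rewrite <- hv at 2. apply pc_meet; auto. }
  destruct (Hs (fun a b => meet a v = meet b v)) as [Hid | Htot].
  - unfold is_congruence. split; [|split; [|split; [|split; [|split; [|split]]]]].
    + intros a; reflexivity.
    + intros a b h; auto.
    + intros a b c h1 h2; congruence.
    + intros a1 b1 a2 b2 h1 h2. rewrite (meet_distr a1 a2 v), (meet_distr b1 b2 v), h1, h2; auto.
    + intros a1 b1 a2 b2 h1 h2. rewrite !dist_r, h1, h2; auto.
    + intros a b h. rewrite cong_lemma_star, h, <- cong_lemma_star; auto.
    + intros a b h.
      assert (forall c, meet (dprime c) v = meet (dprime (meet c v)) v) as E.
      { intro c. rewrite dmM, dist_r, hvv, j0; auto. }
      rewrite E, h, <- E; auto.
  - exfalso. assert (top = v) as ht.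
    { apply Hid. rewrite m1l, m_idem; auto. }
    symmetry in ht. unfold v, Ud in ht. apply iter_top_inv in ht.
    apply meet_top in ht; auto. destruct ht as [ht _]. apply dd_top_inv in ht. auto.
  - specialize (Htot top bot). simpl in Htot. rewrite m1l, mC, m0 in Htot; auto.
Qed.
End Mn.

Inductive tm := tV (k : nat) | tM (a b : tm) | tJ (a b : tm) | tS (a : tm) | tP (a : tm) | t0 | t1.

Fixpoint ev {A : sig_alg} (e : nat -> A) (t : tm) : A :=
  match t with
  | tV k => e k
  | tM a b => meet (ev e a) (ev e b)
  | tJ a b => join (ev e a) (ev e b)
  | tS a => pstar (ev e a)
  | tP a => dprime (ev e a)
  | t0 => bot
  | t1 => top
  end.

Definition holds (A : sig_alg) (p : tm * tm) : Prop :=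
  forall e : nat -> A, ev e (fst p) = ev e (snd p).

Fixpoint tit (k : nat) (t : tm) : tm :=
  match k with O => t | S k => tS (tP (tit k t)) end.

Lemma ev_tit {A : sig_alg} (e : nat -> A) k t : ev e (tit k t) = iter_ps k (ev e t).
Proof. induction k; simpl; congruence. Qed.

Lemma ev_ext {A : sig_alg} (e1 e2 : nat -> A) t : (forall k, e1 k = e2 k) -> ev e1 t = ev e2 t.
Proof. intro h; induction t; simpl; congruence. Qed.

Lemma hom_ev {A B : sig_alg} (f : A -> B) (e : nat -> A) t :
  is_hom f -> f (ev e t) = ev (fun k => f (e k)) t.
Proof. intros (h1&h2&h3&h4&h5&h6). induction t; simpl; try congruence. Qed.

Lemma ev_prod I (F : I -> sig_alg) (e : nat -> prod_alg I F) t i :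
  ev e t i = ev (fun k => e k i) t.
Proof. induction t; simpl; try congruence. Qed.

Lemma holds_H (A B : sig_alg) (f : A -> B) p : is_hom f -> surjective f -> holds A p -> holds B p.
Proof.
  intros hf sf h e.
  set (e' := fun k => proj1_sig (constructive_indefinite_description _ (sf (e k)))).
  assert (he : forall k, f (e' k) = e k).
  { intro k. unfold e'. destruct (constructive_indefinite_description _ _). auto. }
  rewrite !(ev_ext e (fun k => f (e' k))) by (intro; auto).
  rewrite <- !hom_ev by auto. rewrite h. auto.
Qed.

Lemma holds_S (A B : sig_alg) (f : B -> A) p : is_hom f -> injective f -> holds A p -> holds B p.
Proof.
  intros hf inj h e. apply inj. rewrite !hom_ev by auto. apply h.
Qed.

Lemma holds_P I (F : I -> sig_alg) p : (forall i, holds (F i) p) -> holds (prod_alg I F) p.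
Proof.
  intros h e. apply functional_extensionality_dep. intro i.
  rewrite !ev_prod. apply h.
Qed.

Definition x0 := tV 0. Definition y0 := tV 1. Definition z0 := tV 2.

Definition mn_ids (n : nat) : list (tm * tm) :=
 [ (tM x0 (tM y0 z0), tM (tM x0 y0) z0);
   (tJ x0 (tJ y0 z0), tJ (tJ x0 y0) z0);
   (tM x0 y0, tM y0 x0);
   (tJ x0 y0, tJ y0 x0);
   (tM x0 (tJ x0 y0), x0);
   (tJ x0 (tM x0 y0), x0);
   (tM x0 (tJ y0 z0), tJ (tM x0 y0) (tM x0 z0));
   (tJ x0 t0, x0);
   (tM x0 t1, x0);
   (tM x0 (tS x0), t0);
   (tM y0 (tS (tM x0 y0)), tM y0 (tS x0));
   (tS t0, t1);
   (tP (tP x0), x0);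
   (tP (tM x0 y0), tJ (tP x0) (tP y0));
   (tP (tJ x0 y0), tM (tP x0) (tP y0));
   (tP t0, t1);
   (tP t1, t0);
   (tM (tM x0 (tP (tS (tP x0)))) (tJ y0 (tS y0)), tM x0 (tP (tS (tP x0))));
   (tit n (tM x0 (tS (tP x0))), tit (S n) (tM x0 (tS (tP x0)))) ].

Definition env3 {A : sig_alg} (x y z : A) : nat -> A :=
  fun k => match k with 0 => x | 1 => y | _ => z end.

Lemma in_Mn_holds n A : in_Mn n A -> Forall (holds A) (mn_ids n).
Proof.
  intro HM. pose proof HM as (HB & HP & HD & Hr & Hi).
  destruct HB as (a1&a2&a3&a4&a5&a6&a7&a8&a9).
  destruct HD as (d1&d2&d3&d4&d5).
  repeat constructor; intro e; simpl; auto.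
  - apply pc_meet. apply HM. auto.
  - apply pc_eq2. apply HM. auto.
  - apply pc_bot. apply HM. auto.
  - apply Hr.
  - rewrite !ev_tit. apply Hi.
Qed.

Lemma holds_in_Mn n A : Forall (holds A) (mn_ids n) -> in_Mn n A.
Proof.
  intro h. unfold mn_ids in h.
  destruct (proj1 (Forall_cons_iff _ _ _) h) as [h1 hh]; clear h; rename hh into h.
  destruct (proj1 (Forall_cons_iff _ _ _) h) as [h2 hh]; clear h; rename hh into h.
  destruct (proj1 (Forall_cons_iff _ _ _) h) as [h3 hh]; clear h; rename hh into h.
  destruct (proj1 (Forall_cons_iff _ _ _) h) as [h4 hh]; clear h; rename hh into h.
  destruct (proj1 (Forall_cons_iff _ _ _) h) as [h5 hh]; clear h; rename hh into h.
  destruct (proj1 (Forall_cons_iff _ _ _) h) as [h6 hh]; clear h; rename hh into h.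
  destruct (proj1 (Forall_cons_iff _ _ _) h) as [h7 hh]; clear h; rename hh into h.
  destruct (proj1 (Forall_cons_iff _ _ _) h) as [h8 hh]; clear h; rename hh into h.
  destruct (proj1 (Forall_cons_iff _ _ _) h) as [h9 hh]; clear h; rename hh into h.
  destruct (proj1 (Forall_cons_iff _ _ _) h) as [h10 hh]; clear h; rename hh into h.
  destruct (proj1 (Forall_cons_iff _ _ _) h) as [h11 hh]; clear h; rename hh into h.
  destruct (proj1 (Forall_cons_iff _ _ _) h) as [h12 hh]; clear h; rename hh into h.
  destruct (proj1 (Forall_cons_iff _ _ _) h) as [h13 hh]; clear h; rename hh into h.
  destruct (proj1 (Forall_cons_iff _ _ _) h) as [h14 hh]; clear h; rename hh into h.
  destruct (proj1 (Forall_cons_iff _ _ _) h) as [h15 hh]; clear h; rename hh into h.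
  destruct (proj1 (Forall_cons_iff _ _ _) h) as [h16 hh]; clear h; rename hh into h.
  destruct (proj1 (Forall_cons_iff _ _ _) h) as [h17 hh]; clear h; rename hh into h.
  destruct (proj1 (Forall_cons_iff _ _ _) h) as [h18 hh]; clear h; rename hh into h.
  destruct (proj1 (Forall_cons_iff _ _ _) h) as [h19 hh]; clear h; rename hh into h.
  assert (HB : is_bdl A).
  { split; [|split; [|split; [|split; [|split; [|split; [|split; [|split]]]]]]].
    - intros x y z; exact (h1 (env3 x y z)).
    - intros x y z; exact (h2 (env3 x y z)).
    - intros x y; exact (h3 (env3 x y x)).
    - intros x y; exact (h4 (env3 x y x)).
    - intros x y; exact (h5 (env3 x y x)).
    - intros x y; exact (h6 (env3 x y x)).
    - intros x y z; exact (h7 (env3 x y z)).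
    - intros x; exact (h8 (env3 x x x)).
    - intros x; exact (h9 (env3 x x x)). }
  split; [exact HB|]. split; [|split; [|split]].
  - intros x y. pose proof (h10 (env3 x x x)) as E10. pose proof (h11 (env3 x y x)) as E11.
    pose proof (h12 (env3 x x x)) as E12. simpl in E10, E11, E12. split.
    + intro hxy. unfold le. rewrite <- E11, hxy, E12, m1; auto.
    + intro hle. unfold le in hle. rewrite <- hle, mA, (mC _ HB x y), <- mA, E10, m0; auto.
  - split; [|split; [|split; [|split]]].
    + intros x; exact (h13 (env3 x x x)).
    + intros x y; exact (h14 (env3 x y x)).
    + intros x y; exact (h15 (env3 x y x)).
    + exact (h16 (env3 top top top)).
    + exact (h17 (env3 top top top)).
  - intros x y; exact (h18 (env3 x y x)).
  - intros x. pose proof (h19 (env3 x x x)) as E. simpl in E. rewrite !ev_tit in E. exact E.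
Qed.

Lemma Mn_H n (A B : sig_alg) (f : A -> B) : in_Mn n A -> is_hom f -> surjective f -> in_Mn n B.
Proof.
  intros hA hf sf. apply holds_in_Mn. apply in_Mn_holds in hA.
  eapply Forall_impl; [|exact hA]. intros p hp. eapply holds_H; eauto.
Qed.
Lemma Mn_S n (A B : sig_alg) (f : B -> A) : in_Mn n A -> is_hom f -> injective f -> in_Mn n B.
Proof.
  intros hA hf sf. apply holds_in_Mn. apply in_Mn_holds in hA.
  eapply Forall_impl; [|exact hA]. intros p hp. eapply holds_S; eauto.
Qed.
Lemma Mn_P n I (F : I -> sig_alg) : (forall i, in_Mn n (F i)) -> in_Mn n (prod_alg I F).
Proof.
  intros hF. apply holds_in_Mn. apply Forall_forall. intros p hp.
  apply holds_P. intro i. pose proof (in_Mn_holds _ _ (hF i)) as h.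
  rewrite Forall_forall in h. auto.
Qed.

Record closedP (A : sig_alg) (P : A -> Prop) : Prop := {
  cm : forall x y, P x -> P y -> P (meet x y);
  cj : forall x y, P x -> P y -> P (join x y);
  cs : forall x, P x -> P (pstar x);
  cp : forall x, P x -> P (dprime x);
  c0 : P bot;
  c1 : P top }.

Definition subalg (A : sig_alg) (P : A -> Prop) (h : closedP A P) : sig_alg :=
  {| car := {x : A | P x};
     meet := fun x y => exist _ (meet (proj1_sig x) (proj1_sig y)) (cm _ _ h _ _ (proj2_sig x) (proj2_sig y));
     join := fun x y => exist _ (join (proj1_sig x) (proj1_sig y)) (cj _ _ h _ _ (proj2_sig x) (proj2_sig y));
     pstar := fun x => exist _ (pstar (proj1_sig x)) (cs _ _ h _ (proj2_sig x));
     dprime := fun x => exist _ (dprime (proj1_sig x)) (cp _ _ h _ (proj2_sig x));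
     bot := exist _ bot (c0 _ _ h);
     top := exist _ top (c1 _ _ h) |}.

Lemma val_hom A P h : is_hom (fun x : subalg A P h => proj1_sig x).
Proof. repeat split. Qed.
Lemma val_inj A P h : injective (fun x : subalg A P h => proj1_sig x).
Proof. intros [x px] [y py] e. simpl in e. subst. f_equal. apply proof_irrelevance. Qed.

Lemma hom_comp {A B C : sig_alg} (f : A -> B) (g : B -> C) :
  is_hom f -> is_hom g -> is_hom (fun x => g (f x)).
Proof.
  intros (f1&f2&f3&f4&f5&f6) (g1&g2&g3&g4&g5&g6).
  repeat split; intros; rewrite ?f1, ?f2, ?f3, ?f4, ?f5, ?f6, ?g1, ?g2, ?g3, ?g4, ?g5, ?g6; auto.
Qed.
Lemma inj_comp {A B C : Type} (f : A -> B) (g : B -> C) :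
  injective f -> injective g -> injective (fun x => g (f x)).
Proof. intros hf hg x y e. auto. Qed.
Lemma id_hom (A : sig_alg) : is_hom (fun x : A => x). Proof. repeat split. Qed.
Lemma proj_hom I (F : I -> sig_alg) j : is_hom (fun x : prod_alg I F => x j).
Proof. repeat split. Qed.

Lemma hom_iter {A B : sig_alg} (f : A -> B) k x : is_hom f -> f (iter_ps k x) = iter_ps k (f x).
Proof. intros (f1&f2&f3&f4&f5&f6). induction k; simpl; auto. rewrite f3, f4, IHk; auto. Qed.

Lemma hom_Ud n {A B : sig_alg} (f : A -> B) x y : is_hom f -> f (Ud n x y) = Ud n (f x) (f y).
Proof.
  intro hf. unfold Ud. rewrite hom_iter by auto. f_equal.
  destruct hf as (f1&f2&f3&f4&f5&f6). unfold dd, DD, gg.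
  repeat (rewrite ?f1, ?f2, ?f3, ?f4). auto.
Qed.

Lemma hom_fold {A B : sig_alg} (f : A -> B) l : is_hom f ->
  f (fold_right join bot l) = fold_right join bot (map f l).
Proof. intros (f1&f2&f3&f4&f5&f6). induction l; simpl; auto. rewrite f2, IHl; auto. Qed.

Lemma fold_bot (A : sig_alg) (HB : is_bdl A) (l : list A) :
  (forall x, In x l -> x = bot) -> fold_right join bot l = bot.
Proof. induction l; simpl; auto. intro h. rewrite IHl by auto. rewrite (h a) by auto.
  apply j0; auto. Qed.
Lemma fold_top (A : sig_alg) (HB : is_bdl A) (l : list A) :
  In top l -> fold_right join bot l = top.
Proof. induction l; simpl; [tauto|]. intros [e|h].
  - rewrite e, jC; auto. apply j1; auto.
  - rewrite IHl by auto. apply j1; auto. Qed.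

Lemma triv_contra n (A : sig_alg) : simple A -> in_Mn n A -> (@top A) = bot -> False.
Proof.
  intros [[x [y hxy]] _] hM e. apply hxy. destruct hM as [HB _].
  rewrite <- (m1 _ HB x), <- (m1 _ HB y), e, !m0; auto.
Qed.

Lemma gv_H K : closed_H (gen_variety K).
Proof. intros A B f hA hf sf C hC hK. pose proof hC as [hH _]. exact (hH A B f (hA C hC hK) hf sf). Qed.
Lemma gv_S K : closed_S (gen_variety K).
Proof. intros A B f hA hf sf C hC hK. pose proof hC as [_ [hS _]]. exact (hS A B f (hA C hC hK) hf sf). Qed.
Lemma gv_P K : closed_P (gen_variety K).
Proof. intros I F hF C hC hK. pose proof hC as [_ [_ hP]]. apply hP. intro i. apply hF; auto. Qed.
Lemma gv_K K A : K A -> gen_variety K A.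
Proof. intros hA C _ hK. auto. Qed.

Definition Qp (K : alg_class) (A : sig_alg) : Prop :=
  forall (S A' : sig_alg) (i : S -> A) (f : S -> A'), is_hom i -> injective i ->
    is_hom f -> surjective f -> finite_alg A' -> simple A' ->
    exists B : sig_alg, K B /\ exists e : A' -> B, is_hom e /\ injective e.

Lemma Qp_S K (A B : sig_alg) (g : B -> A) : Qp K A -> is_hom g -> injective g -> Qp K B.
Proof.
  intros hA hg ig S A' i f hi ii hf sf fA sA.
  apply (hA S A' (fun x => g (i x)) f); auto using hom_comp, inj_comp.
Qed.

Lemma Qp_image K (S0 T A' : sig_alg) (p : S0 -> T) (f0 : S0 -> A') :
  Qp K T -> is_hom p -> is_hom f0 -> surjective f0 ->
  (forall a b, p a = p b -> f0 a = f0 b) -> finite_alg A' -> simple A' ->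
  exists B : sig_alg, K B /\ exists e : A' -> B, is_hom e /\ injective e.
Proof.
  intros hT hp hf sf hker fA sA.
  pose proof hp as (p1&p2&p3&p4&p5&p6).
  pose proof hf as (g1&g2&g3&g4&g5&g6).
  assert (hc : closedP T (fun y => exists s, p s = y)).
  { constructor.
    - intros x y [s1 <-] [s2 <-]. exists (meet s1 s2); auto.
    - intros x y [s1 <-] [s2 <-]. exists (join s1 s2); auto.
    - intros x [s1 <-]. exists (pstar s1); auto.
    - intros x [s1 <-]. exists (dprime s1); auto.
    - exists bot; auto.
    - exists top; auto. }
  set (S' := subalg T _ hc).
  set (k := fun y : S' => proj1_sig (constructive_indefinite_description _ (proj2_sig y))).
  assert (hk : forall y : S', p (k y) = proj1_sig y).
  { intro y. unfold k. destruct (constructive_indefinite_description _ _). auto. }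
  apply (hT S' A' (fun y => proj1_sig y) (fun y => f0 (k y))); auto.
  - apply val_hom.
  - apply val_inj.
  - repeat split.
    + intros x y. rewrite <- g1. apply hker. rewrite p1, !hk. auto.
    + intros x y. rewrite <- g2. apply hker. rewrite p2, !hk. auto.
    + intros x. rewrite <- g3. apply hker. rewrite p3, !hk. auto.
    + intros x. rewrite <- g4. apply hker. rewrite p4, !hk. auto.
    + rewrite <- g5. apply hker. rewrite p5, !hk. auto.
    + rewrite <- g6. apply hker. rewrite p6, !hk. auto.
  - intro a. destruct (sf a) as [s <-].
    exists (exist _ (p s) (ex_intro _ s eq_refl)). apply hker. rewrite hk. auto.
Qed.

Lemma Qp_H K (A B : sig_alg) (h : A -> B) : Qp K A -> is_hom h -> surjective h -> Qp K B.
Proof.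
  intros hA hh sh S A' i f hi ii hf sf fA sA.
  pose proof hh as (p1&p2&p3&p4&p5&p6).
  pose proof hi as (q1&q2&q3&q4&q5&q6).
  assert (hc : closedP A (fun a => exists s, h a = i s)).
  { constructor.
    - intros x y [s1 e1] [s2 e2]. exists (meet s1 s2). rewrite p1, q1; congruence.
    - intros x y [s1 e1] [s2 e2]. exists (join s1 s2). rewrite p2, q2; congruence.
    - intros x [s1 e1]. exists (pstar s1). rewrite p3, q3; congruence.
    - intros x [s1 e1]. exists (dprime s1). rewrite p4, q4; congruence.
    - exists bot. rewrite p5, q5; auto.
    - exists top. rewrite p6, q6; auto. }
  set (S2 := subalg A _ hc).
  set (k := fun y : S2 => proj1_sig (constructive_indefinite_description _ (proj2_sig y))).
  assert (hk : forall y : S2, i (k y) = h (proj1_sig y)).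
  { intro y. unfold k. destruct (constructive_indefinite_description _ _). auto. }
  assert (hkh : is_hom k).
  { repeat split; intros; apply ii.
    - rewrite q1, !hk. simpl. auto.
    - rewrite q2, !hk. simpl. auto.
    - rewrite q3, !hk. simpl. auto.
    - rewrite q4, !hk. simpl. auto.
    - rewrite q5, !hk. simpl. auto.
    - rewrite q6, !hk. simpl. auto. }
  apply (hA S2 A' (fun y => proj1_sig y) (fun y => f (k y))); auto.
  - apply val_hom.
  - apply val_inj.
  - apply hom_comp; auto.
  - intro a. destruct (sf a) as [s <-]. destruct (sh (i s)) as [x hx].
    exists (exist _ x (ex_intro _ s hx)). f_equal. apply ii. rewrite hk. auto.
Qed.

Lemma Qp_K n (K : alg_class) (hK : forall A, K A -> in_Mn n A /\ simple A) B : K B -> Qp K B.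
Proof.
  intros kB S A' i f hi ii hf sf fA sA.
  destruct (hK B kB) as [mB sB].
  assert (mS : in_Mn n S) by (eapply Mn_S; eauto).
  assert (mA : in_Mn n A') by (eapply Mn_H; eauto).
  assert (finj : injective f).
  { intros x y e. destruct (classic (x = y)) as [|hne]; auto. exfalso.
    assert (hne' : i x <> i y) by (intro h; apply hne; auto).
    pose proof (Ud_simple n B mB _ _ sB hne') as hU.
    rewrite <- hom_Ud in hU by auto.
    destruct hi as (_&_&_&_&hi0&_). rewrite <- hi0 in hU. apply ii in hU.
    assert (f (Ud n x y) = top) as hT.
    { rewrite hom_Ud, e by auto. apply Ud_refl; auto. }
    rewrite hU in hT. destruct hf as (_&_&_&_&hf0&_). rewrite hf0 in hT.
    apply (triv_contra n A' sA mA). symmetry; auto. }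
  set (g := fun a => proj1_sig (constructive_indefinite_description _ (sf a))).
  assert (fg : forall a, f (g a) = a).
  { intro a. unfold g. destruct (constructive_indefinite_description _ _). auto. }
  pose proof hf as (f1&f2&f3&f4&f5&f6).
  assert (hg : is_hom g).
  { repeat split; intros; apply finj; rewrite ?f1, ?f2, ?f3, ?f4, ?f5, ?f6, !fg; auto. }
  exists B. split; auto. exists (fun a => i (g a)). split.
  - apply hom_comp; auto.
  - intros a b e. apply ii in e. rewrite <- (fg a), <- (fg b), e. auto.
Qed.

Lemma gen_closed (S : sig_alg) (g : list S) : closedP S (generated g).
Proof. constructor; intros. apply gen_meet; auto. apply gen_join; auto. apply gen_pstar; auto. apply gen_dprime; auto. apply gen_bot. apply gen_top. Qed.

Lemma gen_fg (S : sig_alg) (g : list S) : fin_generated (subalg S (generated g) (gen_closed S g)).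
Proof.
  set (S0 := subalg S (generated g) (gen_closed S g)).
  assert (E : forall z (pf1 pf2 : generated g z), exist (fun x0 : S => generated g x0) z pf1 = exist (fun x0 : S => generated g x0) z pf2)
    by (intros; f_equal; apply proof_irrelevance).
  assert (hg0 : forall l, (forall x, In x l -> In x g) ->
     exists g0 : list S0, forall x, In x l -> exists pf, In (exist _ x pf) g0).
  { induction l as [|a l IH]; intro hl.
    - exists []. intros x [].
    - destruct IH as [g0 hg0]. intros; apply hl; simpl; auto.
      exists (exist _ a (gen_in g a (hl a (or_introl eq_refl))) :: g0).
      intros x [<-|hx].
      + eexists. left. reflexivity.
      + destruct (hg0 x hx) as [pf hpf]. exists pf. right. auto. }
  destruct (hg0 g (fun x h => h)) as [g0 hG]. exists g0.
  assert (forall s, generated g s -> forall pf, generated g0 (exist _ s pf)).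
  { intros s hs. induction hs; intro pf.
    - destruct (hG x H) as [pf0 hpf0]. rewrite (E _ pf pf0). apply gen_in; auto.
    - rewrite (E _ pf (cm _ _ (gen_closed S g) x y hs1 hs2)).
      exact (gen_meet g0 (exist _ x hs1) (exist _ y hs2) (IHhs1 hs1) (IHhs2 hs2)).
    - rewrite (E _ pf (cj _ _ (gen_closed S g) x y hs1 hs2)).
      exact (gen_join g0 (exist _ x hs1) (exist _ y hs2) (IHhs1 hs1) (IHhs2 hs2)).
    - rewrite (E _ pf (cs _ _ (gen_closed S g) x hs)).
      exact (gen_pstar g0 (exist _ x hs) (IHhs hs)).
    - rewrite (E _ pf (cp _ _ (gen_closed S g) x hs)).
      exact (gen_dprime g0 (exist _ x hs) (IHhs hs)).
    - rewrite (E _ pf (c0 _ _ (gen_closed S g))). exact (gen_bot g0).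
    - rewrite (E _ pf (c1 _ _ (gen_closed S g))). exact (gen_top g0). }
  intros [s pf]. auto.
Qed.

Lemma pre_list {S A' : Type} (f : S -> A') (sf : surjective f) (l : list A') :
  exists g, forall a, In a l -> exists s, In s g /\ f s = a.
Proof.
  induction l as [|a l [g hg]].
  - exists []. intros a [].
  - destruct (sf a) as [s hs]. exists (s :: g). intros b [<-|hb].
    + exists s; simpl; auto.
    + destruct (hg b hb) as [t [ht1 ht2]]. exists t; simpl; auto.
Qed.

Lemma filter_ex {T : Type} (P : T -> Prop) (L : list T) :
  exists l', forall p, In p l' <-> In p L /\ P p.
Proof.
  induction L as [|a L [l' hl]].
  - exists []. simpl. tauto.
  - destruct (classic (P a)) as [ha|ha].
    + exists (a :: l'). intro p. simpl. rewrite hl. split.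
      * intros [<-|[h1 h2]]; auto.
      * intros [[<-|h1] h2]; auto.
    + exists l'. intro p. simpl. rewrite hl. split.
      * intros [h1 h2]; auto.
      * intros [[<-|h1] h2]; [contradiction|auto].
Qed.

Lemma Qp_P n (K : alg_class) (hLF : locally_finite (gen_variety K)) I (F : I -> sig_alg)
  (hF : forall j, gen_variety K (F j) /\ in_Mn n (F j) /\ Qp K (F j)) : Qp K (prod_alg I F).
Proof.
  intros S A' i f hi ii hf sf [l hl] sA.
  assert (mP : in_Mn n (prod_alg I F)) by (apply Mn_P; intro j; apply hF).
  assert (vP : gen_variety K (prod_alg I F)) by (apply gv_P; intro j; apply hF).
  assert (mS : in_Mn n S) by (eapply Mn_S; eauto).
  assert (mA : in_Mn n A') by (eapply Mn_H; eauto).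
  destruct (pre_list f sf l) as [g hg].
  set (S0 := subalg S (generated g) (gen_closed S g)).
  set (i0 := fun x : S0 => i (proj1_sig x)).
  set (f0 := fun x : S0 => f (proj1_sig x)).
  assert (hi0 : is_hom i0) by (apply (hom_comp (fun x : S0 => proj1_sig x) i); auto; apply val_hom).
  assert (ii0 : injective i0) by (apply (inj_comp (fun x : S0 => proj1_sig x) i); auto; apply val_inj).
  assert (hf0 : is_hom f0) by (apply (hom_comp (fun x : S0 => proj1_sig x) f); auto; apply val_hom).
  assert (sf0 : surjective f0).
  { intro a. destruct (hg a (hl a)) as [s [hs e]].
    exists (exist _ s (gen_in g s hs)). auto. }
  assert (vS0 : gen_variety K S0) by (exact (gv_S K _ S0 i0 vP hi0 ii0)).
  destruct (hLF S0 vS0 (gen_fg S g)) as [L hL].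
  assert (key : exists j, forall a b, i0 a j = i0 b j -> f0 a = f0 b).
  { apply NNPP. intro hn.
    assert (hall : forall j, exists a b, i0 a j = i0 b j /\ f0 a <> f0 b).
    { intro j. apply NNPP. intro h2. apply hn. exists j. intros a b e. apply NNPP.
      intro ne. apply h2. exists a, b. auto. }
    destruct (filter_ex (fun p => f0 p = bot) L) as [l' hl'].
    set (P := fold_right join bot l').
    assert (hP0 : f0 P = bot).
    { unfold P. rewrite hom_fold by auto. apply fold_bot. apply mA.
      intros x hx. apply in_map_iff in hx. destruct hx as [p [<- hp]].
      apply hl' in hp. tauto. }
    assert (hT : i0 top = top) by apply hi0.
    assert (hP1 : i0 P = i0 top).
    { rewrite hT. apply functional_extensionality_dep. intro j. simpl.
      assert (hpj : is_hom (fun x => i0 x j)) by (apply (hom_comp i0 (fun y : prod_alg I F => y j)); auto; apply proj_hom).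
      assert (HF := hom_fold (fun x => i0 x j) l' hpj). cbv beta in HF.
      unfold P. rewrite HF.
      destruct (hall j) as [a [b [e ne]]].
      apply fold_top. apply hF. apply in_map_iff. exists (Ud n a b). split.
      - rewrite (hom_Ud n (fun x => i0 x j)) by auto. rewrite e. apply Ud_refl. apply hF.
      - apply hl'. split; auto. rewrite hom_Ud by auto. apply Ud_simple; auto. }
    apply ii0 in hP1. rewrite hP1 in hP0.
    assert (f0 top = top) as h6 by apply hf0.
    rewrite h6 in hP0. exact (triv_contra n A' sA mA hP0). }
  destruct key as [j hj].
  apply (Qp_image K S0 (F j) A' (fun x => i0 x j) f0); auto.
  - apply hF.
  - apply (hom_comp i0 (fun y : prod_alg I F => y j)); auto; apply proj_hom.
  - exists l; auto.
Qed.

Theorem theorem5p1 (n : nat) (K : alg_class)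
  (hK : forall A, K A -> in_Mn n A /\ simple A)
  (hLF : locally_finite (gen_variety K)) :
  forall A : sig_alg, gen_variety K A -> finite_alg A -> simple A ->
    exists B : sig_alg, K B /\
      exists f : A -> B, is_hom f /\ injective f.
Proof.
  intros A gA fA sA.
  assert (hC : gen_variety K A /\ in_Mn n A /\ Qp K A).
  { apply (gA (fun A => gen_variety K A /\ in_Mn n A /\ Qp K A)).
    - split; [|split].
      + intros A0 B f [g1 [m1 q1]] hf sf. split; [|split].
        * exact (gv_H K A0 B f g1 hf sf).
        * eapply Mn_H; eauto.
        * eapply Qp_H; eauto.
      + intros A0 B f [g1 [m1 q1]] hf sf. split; [|split].
        * exact (gv_S K A0 B f g1 hf sf).
        * eapply Mn_S; eauto.
        * eapply Qp_S; eauto.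
      + intros I F hF. split; [|split].
        * apply gv_P. intro j; apply hF.
        * apply Mn_P. intro j; apply hF.
        * apply (Qp_P n K hLF I F hF).
    - intros B kB. split; [|split].
      + apply gv_K; auto.
      + apply hK; auto.
      + apply (Qp_K n K hK B kB). }
  destruct hC as [_ [_ q]].
  apply (q A A (fun x => x) (fun x => x)); auto.
  - apply id_hom.
  - intros x y e; auto.
  - apply id_hom.
  - intro y; exists y; auto.
Qed.
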